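(* Let $(M,\varphi,\eta,\xi,g)$ be a Kenmotsu manifold of dimension $2n+1$ with Levi-Civita connection $\nabla$. Let $(U;x^0,x^1,\dots,x^{2n})$ be a local coordinate chart adapted to the foliation generated by $\xi$, so that $\xi=\partial/\partial x^0$ on $U$, and put $\eta_i=\eta(\partial/\partial x^i)$, $\frac{\delta}{\delta x^i}=\frac{\partial}{\partial x^i}-\eta_i\frac{\partial}{\partial x^0}$, $g_{ij}=g\big(\frac{\delta}{\delta x^i},\frac{\delta}{\delta x^j}\big)$ for $i,j=1,\dots,2n$, and let $(g^{kl})$ be the inverse matrix of $(g_{ij})$. Then on $U$: $$\nabla_{\frac{\delta}{\delta x^i}}\frac{\delta}{\delta x^j}=\Gamma_{ij}^k\frac{\delta}{\delta x^k}-g_{ij}\frac{\partial}{\partial x^0},\qquad \nabla_{\frac{\partial}{\partial x^0}}\frac{\delta}{\delta x^i}=\nabla_{\frac{\delta}{\delta x^i}}\frac{\partial}{\partial x^0}=\frac{\delta}{\delta x^i},\qquad \nabla_{\frac{\partial}{\partial x^0}}\frac{\partial}{\partial x^0}=0,$$ where $\Gamma_{ij}^k=\frac12 g^{kl}\Big\{\frac{\delta g_{lj}}{\delta x^i}+\frac{\delta g_{il}}{\delta x^j}-\frac{\delta g_{ij}}{\delta x^l}\Big\}$ (summation over repeated indices).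
   Context: An almost contact metric structure $(\varphi,\eta,\xi,g)$ on a $(2n+1)$-manifold $M$ consists of a $(1,1)$-tensor $\varphi$, a vector field $\xi$, a $1$-form $\eta$ and a Riemannian metric $g$ with $\varphi^2X=-X+\eta(X)\xi$, $\eta(\xi)=1$, $\eta\circ\varphi=0$, $\varphi\xi=0$, $g(\varphi X,\varphi Y)=g(X,Y)-\eta(X)\eta(Y)$, and $\eta(X)=g(\xi,X)$. It is a Kenmotsu manifold if $(\nabla_X\varphi)Y=g(\varphi X,Y)\xi-\eta(Y)\varphi X$ for all vector fields $X,Y$, where $\nabla$ is the Levi-Civita connection of $g$. *)

(* Defs.v *)
From HB Require Import structures.
From mathcomp Require Import all_boot all_order all_algebra.
From mathcomp Require Import all_classical all_reals all_analysis.
Set Implicit Arguments. Unset Strict Implicit. Unset Printing Implicit Defensive.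
Import Order.TTheory GRing.Theory Num.Theory.
Import numFieldNormedType.Exports.
Local Open Scope classical_set_scope.
Local Open Scope ring_scope.

Section Kenmotsu.
Variables (R : realType) (n : nat).

(* coordinate indices 0..2n ; index 0 is x^0 *)
Local Notation m := (n.*2.+1).
(* points of the chart domain (coordinates (x^0,...,x^2n)) *)
Local Notation pt := 'rV[R]_m.
(* tangent vectors: column vectors of components w.r.t. d/dx^a *)
Local Notation vec := 'cV[R]_m.

Definition ecoord (a : 'I_m) : vec := delta_mx a 0.

Definition partial (a : 'I_m) (f : pt -> R) : pt -> R :=
  fun x => derive f x (delta_mx 0 a : pt).

Definition iter_partial (s : seq 'I_m) (f : pt -> R) : pt -> R :=
  foldr partial f s.

Definition smooth_on (U : set pt) (f : pt -> R) : Prop :=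
  forall (s : seq 'I_m) (x : pt), U x -> differentiable (iter_partial s f) x.

Definition smooth_vf (U : set pt) (X : pt -> vec) : Prop :=
  forall c : 'I_m, smooth_on U (fun y => X y c 0).

(* Christoffel symbols of the Levi-Civita connection of the metric G
   (G x a b = g(d/dx^a, d/dx^b)):
   Gamma^c_{ab} = 1/2 g^{cd} (d_a g_{db} + d_b g_{ad} - d_d g_{ab}) *)
Definition christoffel (G : pt -> 'M[R]_m) (x : pt) (c a b : 'I_m) : R :=
  2^-1 * \sum_(d < m) invmx (G x) c d *
    (partial a (fun y => G y d b) x + partial b (fun y => G y a d) x
     - partial d (fun y => G y a b) x).

Definition levi_civita (G : pt -> 'M[R]_m) (X Y : pt -> vec) (x : pt) : vec :=
  \col_(c < m) (\sum_(a < m) X x a 0 * partial a (fun y => Y y c 0) x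
     + \sum_(a < m) \sum_(b < m) christoffel G x c a b * X x a 0 * Y x b 0).

Definition gmet (G : pt -> 'M[R]_m) (x : pt) (X Y : vec) : R :=
  ((X^T *m G x *m Y) 0 0).

Definition riemannian_on (U : set pt) (G : pt -> 'M[R]_m) : Prop :=
  (forall a b : 'I_m, smooth_on U (fun y => G y a b)) /\
  (forall x, U x -> (G x)^T = G x /\
     forall v : vec, v != 0 -> 0 < gmet G x v v).

(* almost contact metric structure (phi, eta, xi, g) on U;
   Phi x = matrix of phi (phi(d_b) = sum_a Phi x a b d_a),
   eta x = row of components eta_a = eta(d_a), xi x = components of xi *)
Definition almost_contact_metric_on (U : set pt) (Phi : pt -> 'M[R]_m)
    (eta : pt -> 'rV[R]_m) (xi : pt -> vec) (G : pt -> 'M[R]_m) : Prop :=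
  riemannian_on U G /\
  (forall a b : 'I_m, smooth_on U (fun y => Phi y a b)) /\
  (forall a : 'I_m, smooth_on U (fun y => eta y 0 a)) /\
  (forall a : 'I_m, smooth_on U (fun y => xi y a 0)) /\
  (forall x, U x ->
     [/\ Phi x *m Phi x = - 1%:M + xi x *m eta x,
         eta x *m xi x = 1%:M,
         eta x *m Phi x = 0,
         Phi x *m xi x = 0 &
         (forall X Y : vec, gmet G x (Phi x *m X) (Phi x *m Y)
                            = gmet G x X Y - (eta x *m X) 0 0 * (eta x *m Y) 0 0)
         /\ (forall X : vec, (eta x *m X) 0 0 = gmet G x (xi x) X)]).

(* Kenmotsu condition: (nabla_X phi) Y = g(phi X, Y) xi - eta(Y) phi X *)
Definition kenmotsu_on (U : set pt) (Phi : pt -> 'M[R]_m)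
    (eta : pt -> 'rV[R]_m) (xi : pt -> vec) (G : pt -> 'M[R]_m) : Prop :=
  almost_contact_metric_on U Phi eta xi G /\
  forall X Y : pt -> vec, smooth_vf U X -> smooth_vf U Y ->
  forall x, U x ->
    levi_civita G X (fun y => Phi y *m Y y) x - Phi x *m levi_civita G X Y x
    = gmet G x (Phi x *m X x) (Y x) *: xi x
      - (eta x *m Y x) 0 0 *: (Phi x *m X x).

(* horizontal index i = 1..2n, encoded by i : 'I_(2n) |-> lift ord0 i *)
Definition hidx (i : 'I_(n.*2)) : 'I_m := lift ord0 i.

Definition dvf (eta : pt -> 'rV[R]_m) (i : 'I_(n.*2)) : pt -> vec :=
  fun x => ecoord (hidx i) - eta x 0 (hidx i) *: ecoord ord0.

Definition dpartial (eta : pt -> 'rV[R]_m) (i : 'I_(n.*2)) (f : pt -> R) : pt -> R :=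
  fun x => partial (hidx i) f x - eta x 0 (hidx i) * partial ord0 f x.

Definition hmet (G : pt -> 'M[R]_m) (eta : pt -> 'rV[R]_m)
    (i j : 'I_(n.*2)) : pt -> R :=
  fun x => gmet G x (dvf eta i x) (dvf eta j x).

Definition hmetmx (G : pt -> 'M[R]_m) (eta : pt -> 'rV[R]_m) (x : pt)
  : 'M[R]_(n.*2) := \matrix_(i, j) hmet G eta i j x.

Definition hchristoffel (G : pt -> 'M[R]_m) (eta : pt -> 'rV[R]_m) (x : pt)
    (k i j : 'I_(n.*2)) : R :=
  2^-1 * \sum_(l < n.*2) invmx (hmetmx G eta x) k l *
    (dpartial eta i (hmet G eta l j) x + dpartial eta j (hmet G eta i l) x
     - dpartial eta l (hmet G eta i j) x).

End Kenmotsu.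

(* Main.v *)
Require Import Defs.
From HB Require Import structures.
From mathcomp Require Import all_boot all_order all_algebra.
From mathcomp Require Import all_classical all_reals all_analysis.
From mathcomp Require Import ring lra.
Import Order.TTheory GRing.Theory Num.Theory.
Import numFieldNormedType.Exports.
Local Open Scope classical_set_scope.
Local Open Scope ring_scope.

Set Implicit Arguments. Unset Strict Implicit.


Lemma sum_delta_l (R : realType) k (b : 'I_k) (F : 'I_k -> R) :
  \sum_(a < k) (a == b)%:R * F a = F b.
Proof.
rewrite (bigD1 b) //= eqxx mul1r big1 ?addr0 // => a /negbTE ->; exact: mul0r.
Qed.

Lemma sum_delta_r (R : realType) k (b : 'I_k) (F : 'I_k -> R) :
  \sum_(a < k) F a * (a == b)%:R = F b.
Proof. rewrite -[RHS](sum_delta_l b); apply: eq_bigr => a _; exact: mulrC. Qed.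

Lemma ecoordE (R : realType) n (a c : 'I_(n.*2.+1)) :
  @ecoord R n a c 0 = (c == a)%:R.
Proof. by rewrite /ecoord mxE eqxx andbT. Qed.

Lemma dvfE (R : realType) n (eta : 'rV[R]_(n.*2.+1) -> 'rV[R]_(n.*2.+1)) i x c :
  dvf eta i x c 0 = (c == hidx i)%:R - eta x 0 (hidx i) * (c == ord0)%:R.
Proof. by rewrite /dvf !mxE !andbT. Qed.

Lemma sum_ecoord_l (R : realType) n (b : 'I_(n.*2.+1)) (F : 'I_(n.*2.+1) -> R) :
  \sum_a @ecoord R n b a 0 * F a = F b.
Proof. rewrite -[RHS](sum_delta_l b); apply: eq_bigr => a _; by rewrite ecoordE. Qed.

Lemma sum_ecoord_r (R : realType) n (b : 'I_(n.*2.+1)) (F : 'I_(n.*2.+1) -> R) :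
  \sum_a F a * @ecoord R n b a 0 = F b.
Proof. rewrite -[RHS](sum_delta_r b); apply: eq_bigr => a _; by rewrite ecoordE. Qed.

Lemma sum_dvf_l (R : realType) n (eta : 'rV[R]_(n.*2.+1) -> 'rV[R]_(n.*2.+1)) i x
   (F : 'I_(n.*2.+1) -> R) :
  \sum_a dvf eta i x a 0 * F a = F (hidx i) - eta x 0 (hidx i) * F ord0.
Proof.
under eq_bigr => a _ do rewrite dvfE mulrBl -mulrA.
by rewrite sumrB sum_delta_l -mulr_sumr sum_delta_l.
Qed.

Lemma sum_dvf_r (R : realType) n (eta : 'rV[R]_(n.*2.+1) -> 'rV[R]_(n.*2.+1)) i x
   (F : 'I_(n.*2.+1) -> R) :
  \sum_a F a * dvf eta i x a 0 = F (hidx i) - eta x 0 (hidx i) * F ord0.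
Proof. rewrite -sum_dvf_l; apply: eq_bigr => a _; exact: mulrC. Qed.

Lemma gmetE (R : realType) n (G : 'rV[R]_(n.*2.+1) -> 'M[R]_(n.*2.+1)) x X Y :
  gmet G x X Y = \sum_a X a 0 * \sum_b G x a b * Y b 0.
Proof.
rewrite /gmet !mxE.
under eq_bigr => b _ do rewrite !mxE big_distrl /=.
rewrite exchange_big /=; apply: eq_bigr => a _; rewrite mulr_sumr.
by apply: eq_bigr => b _; rewrite !mxE mulrA.
Qed.

Lemma levi_civitaE (R : realType) n (G : 'rV[R]_(n.*2.+1) -> 'M[R]_(n.*2.+1)) X Y x c :
  levi_civita G X Y x c 0 = \sum_a X x a 0 * partial a (fun y => Y y c 0) x
     + \sum_a \sum_b christoffel G x c a b * X x a 0 * Y x b 0.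
Proof. by rewrite /levi_civita mxE. Qed.

Lemma mul_ecoord (R : realType) n k (A : 'M[R]_(k, n.*2.+1)) i a :
  (A *m @ecoord R n a) i 0 = A i a.
Proof. by rewrite mxE sum_ecoord_r. Qed.

Lemma sum_inv (R : realType) k (A B : 'M[R]_k) (T : 'I_k -> R) l :
  A *m B = 1%:M -> \sum_c A l c * \sum_d B c d * T d = T l.
Proof.
move=> AB.
have -> : \sum_c A l c * \sum_d B c d * T d = \sum_d (A *m B) l d * T d.
  under [RHS]eq_bigr => d _ do rewrite mxE big_distrl /=.
  rewrite exchange_big /=; apply: eq_bigr => c _; rewrite mulr_sumr.
  by apply: eq_bigr => d _; rewrite mulrA.
rewrite AB; under eq_bigr => d _ do rewrite mxE eq_sym.
exact: sum_delta_l.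
Qed.

Lemma pd_unit (R : realType) k (A : 'M[R]_k) :
  (forall v : 'cV[R]_k, v != 0 -> 0 < (v^T *m A *m v) 0 0) -> A \in unitmx.
Proof.
move=> pd; rewrite -row_free_unit; apply: inj_row_free => v vA.
apply/eqP; apply: contraT => v0.
have : v^T != 0 by apply: contra v0 => /eqP h; rewrite -[v]trmxK h trmx0.
move/pd; rewrite trmxK vA mul0mx mxE ltxx //.
Qed.
Lemma partial_loc (R : realType) n (U : set 'rV[R]_(n.*2.+1)) (f g : 'rV[R]_(n.*2.+1) -> R) a x :
  open U -> U x -> (forall y, U y -> f y = g y) -> partial a f x = partial a g x.
Proof.
move=> oU Ux fg; apply: near_eq_derive.
have nU : nbhs x U by apply: open_nbhs_nbhs; split.
by apply: filterS nU => y Uy; apply: fg.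
Qed.

Lemma partial_cst (R : realType) n (c : R) a (x : 'rV[R]_(n.*2.+1)) :
  partial a (fun _ => c) x = 0.
Proof. exact: derive_cst. Qed.

Lemma iter_partial_cst (R : realType) n (c : R) (s : seq 'I_(n.*2.+1)) :
  iter_partial s (fun _ => c) = fun _ => if s is [::] then c else 0.
Proof.
elim: s => [//|a s IH] /=; apply/funext => y.
rewrite /partial IH; case: s {IH} => [|b s]; exact: derive_cst.
Qed.

Lemma smooth_cst (R : realType) n (U : set 'rV[R]_(n.*2.+1)) (c : R) :
  smooth_on U (fun _ => c).
Proof. move=> s y _; rewrite iter_partial_cst; exact: differentiable_cst. Qed.

Lemma smooth_vf_cst (R : realType) n (U : set 'rV[R]_(n.*2.+1)) (v : 'cV[R]_(n.*2.+1)) :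
  smooth_vf U (fun _ => v).
Proof. move=> c; exact: smooth_cst. Qed.

Lemma smooth_derivable (R : realType) n (U : set 'rV[R]_(n.*2.+1)) f x v :
  smooth_on U f -> U x -> derivable f x v.
Proof. move=> sf Ux; apply: diff_derivable; exact: (sf [::] x Ux). Qed.

Lemma partial_fgh (R : realType) n (f g h : 'rV[R]_(n.*2.+1) -> R) a x :
  derivable f x (delta_mx 0 a) -> derivable g x (delta_mx 0 a) ->
  derivable h x (delta_mx 0 a) ->
  partial a (fun y => f y - g y * h y) x
  = partial a f x - (g x * partial a h x + h x * partial a g x).
Proof.
move=> df dg dh; rewrite /partial.
have -> : (fun y => f y - g y * h y) = f - g * h by [].
rewrite deriveB ?deriveM //; exact: derivableM.
Qed.
Lemma tr00 (R : realType) (A : 'M[R]_1) : A 0 0 = A^T 0 0.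
Proof. by rewrite mxE. Qed.

Lemma gmet_sym (R : realType) n (G : 'rV[R]_(n.*2.+1) -> 'M[R]_(n.*2.+1)) x X Y :
  (G x)^T = G x -> gmet G x X Y = gmet G x Y X.
Proof.
move=> sy; rewrite /gmet -[in RHS]sy [RHS]tr00.
by rewrite !trmx_mul !trmxK mulmxA.
Qed.

Unset Implicit Arguments. Set Strict Implicit.

Theorem theorem1 (R : realType) (n : nat) (U : set 'rV[R]_(n.*2.+1))
    (Phi : 'rV[R]_(n.*2.+1) -> 'M[R]_(n.*2.+1))
    (eta : 'rV[R]_(n.*2.+1) -> 'rV[R]_(n.*2.+1))
    (xi : 'rV[R]_(n.*2.+1) -> 'cV[R]_(n.*2.+1))
    (G : 'rV[R]_(n.*2.+1) -> 'M[R]_(n.*2.+1)) :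
  open U ->
  kenmotsu_on U Phi eta xi G ->
  (forall x, U x -> xi x = (@ecoord R n ord0)) ->
  forall x, U x ->
    (forall i j : 'I_(n.*2),
       levi_civita G (dvf eta i) (dvf eta j) x
       = \sum_(k < n.*2) hchristoffel G eta x k i j *: dvf eta k x
         - hmet G eta i j x *: (@ecoord R n ord0)) /\
    (forall i : 'I_(n.*2),
       levi_civita G (fun _ => (@ecoord R n ord0)) (dvf eta i) x = dvf eta i x /\
       levi_civita G (dvf eta i) (fun _ => (@ecoord R n ord0)) x = dvf eta i x) /\
    levi_civita G (fun _ => (@ecoord R n ord0)) (fun _ => (@ecoord R n ord0)) x = 0.
Proof.
move=> oU [[[Gsm Gpt] [Phism [etasm [xism acpt]]]] kc] xiE x Ux.
have Sy : forall y, U y -> forall a b, G y a b = G y b a.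
  by move=> y Uy a b; have [sy _] := Gpt y Uy; rewrite -{1}sy mxE.
have Ey : forall y, U y -> forall a, eta y 0 a = G y ord0 a.
  move=> y Uy a; have [_ _ _ _ [_ hg]] := acpt y Uy.
  by have := hg (ecoord R a); rewrite mul_ecoord gmetE xiE // sum_ecoord_l sum_ecoord_r.
have E00y : forall y, U y -> eta y 0 ord0 = 1.
  move=> y Uy; have [_ h _ _ _] := acpt y Uy; move: h; rewrite xiE //.
  by move=> /matrixP /(_ 0 0); rewrite mul_ecoord !mxE eqxx.
have G00y : forall y, U y -> G y ord0 ord0 = 1 by move=> y Uy; rewrite -Ey ?E00y.
have dS : forall a b c, partial a (fun y => G y b c) x = partial a (fun y => G y c b) x.
  by move=> a b c; apply: partial_loc oU Ux _ => y Uy; exact: Sy.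
have d00 : forall a, partial a (fun y => G y ord0 ord0) x = 0.
  move=> a; rewrite (@partial_loc _ _ U _ (fun _ => 1) a x oU Ux) ?partial_cst //.
have pe : forall a b, partial a (fun y => eta y 0 b) x = partial a (fun y => G y ord0 b) x.
  by move=> a b; apply: partial_loc oU Ux _ => y Uy; exact: Ey.
have Gu : G x \in unitmx.
  by apply: pd_unit => v v0; have [_ pd] := Gpt x Ux; exact: pd v v0.
have low : forall l a b, \sum_c G x l c * christoffel G x c a b
   = 2^-1 * (partial a (fun y => G y l b) x + partial b (fun y => G y a l) x
             - partial l (fun y => G y a b) x).
  move=> l a b; rewrite /christoffel.
  under eq_bigr => c _ do rewrite mulrCA.
  by rewrite -mulr_sumr (sum_inv _ _ (mulmxV Gu)).

have gsym : forall X Y, gmet G x X Y = gmet G x Y X.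
  by move=> X Y; have [sy _] := Gpt x Ux; exact: gmet_sym.
have [PP etaxi etaP Pxi [_ hg]] := acpt x Ux.
have va : forall a c, levi_civita G (fun _ => ecoord R a) (fun _ => ecoord R ord0) x c 0
     = christoffel G x c a ord0.
  move=> a c; rewrite levi_civitaE big1 ?add0r; last first.
    by move=> a' _; rewrite partial_cst mulr0.
  under eq_bigr => a' _ do rewrite sum_ecoord_r.
  exact: sum_ecoord_r.

have K : forall a c, christoffel G x c a ord0 = (c == a)%:R - eta x 0 a * (c == ord0)%:R.
  move=> a c.
  have kc' := kc (fun _ => ecoord R a) (fun _ => ecoord R ord0)
    (@smooth_vf_cst R n U _) (@smooth_vf_cst R n U _) x Ux.
  have L1 : levi_civita G (fun _ => ecoord R a) (fun y => Phi y *m ecoord R ord0) x = 0.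
    apply/matrixP => c' k; rewrite [k]ord1 levi_civitaE [RHS]mxE.
    rewrite big1 => [|a' _]; last first.
      rewrite (@partial_loc _ _ U _ (fun _ => 0) a' x oU Ux) ?partial_cst ?mulr0 //.
      by move=> y Uy; have [_ _ _ h _] := acpt y Uy; rewrite -(xiE y Uy) h mxE.
    rewrite add0r big1 // => a' _; apply: big1 => b _.
    by rewrite -(xiE x Ux) Pxi !mxE mulr0.
  rewrite /= L1 sub0r gsym -(xiE x Ux) -hg mulmxA etaP mul0mx mxE scale0r sub0r in kc'.
  rewrite (xiE x Ux) mul_ecoord E00y // scale1r in kc'.
  move/oppr_inj: kc' => kc'.
  have Pu : Phi x *m (levi_civita G (fun _ => ecoord R a) (fun _ => ecoord R ord0) x - ecoord R a) = 0.
    by rewrite mulmxBr kc' subrr.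
  have := congr1 (mulmx (Phi x)) Pu.
  rewrite mulmx0 mulmxA PP mulmxDl mulNmx mul1mx -mulmxA => /eqP.
  rewrite addrC subr_eq0 => /eqP uE.
  have ev : (eta x *m levi_civita G (fun _ => ecoord R a) (fun _ => ecoord R ord0) x) 0 0 = 0.
    rewrite hg (xiE x Ux) gmetE sum_ecoord_l.
    under eq_bigr => b _ do rewrite va.
    by rewrite low d00 add0r subrr mulr0.
  have eu : (eta x *m (levi_civita G (fun _ => ecoord R a) (fun _ => ecoord R ord0) x
      - ecoord R a)) 0 0 = - eta x 0 a.
    by rewrite mulmxBr mxE ev mxE mul_ecoord add0r.
  have := congr1 (fun M : 'cV[R]_(n.*2.+1) => M c 0) uE => /=.
  rewrite mxE big_ord1 -[@ord0 0]/(0 : 'I_1) eu (xiE x Ux) ecoordE [RHS]mxE va mxE ecoordE => h.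
  rewrite -[LHS](subrK ((c == a)%:R)) -h; ring.

have LK : forall l a, 2^-1 * (partial a (fun y => G y l ord0) x
     + partial ord0 (fun y => G y a l) x - partial l (fun y => G y a ord0) x)
     = G x l a - eta x 0 a * eta x 0 l.
  move=> l a; rewrite -low.
  under eq_bigr => c _ do rewrite K mulrBr mulrCA.
  by rewrite sumrB sum_delta_r -mulr_sumr sum_delta_r (Sy x Ux l ord0) -Ey.
have symd : forall a b, partial a (fun y => G y b ord0) x = partial b (fun y => G y a ord0) x.
  move=> a b; have h1 := LK b a; have h2 := LK a b.
  rewrite (dS ord0 b a) (Sy x Ux a b) [eta x 0 b * _]mulrC in h2.
  lra.
have d0 : forall a b, partial ord0 (fun y => G y a b) x = 2 * (G x a b - eta x 0 a * eta x 0 b).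
  move=> a b; have h1 := LK b a; rewrite (symd a b) (Sy x Ux b a) in h1; lra.

have d00b : forall b, partial ord0 (fun y => G y ord0 b) x = 0.
  by move=> b; rewrite d0 -Ey // E00y // mul1r subrr mulr0.
have Gsym : forall c a b, christoffel G x c a b = christoffel G x c b a.
  move=> c a b; rewrite /christoffel; congr (_ * _); apply: eq_bigr => d' _.
  rewrite (dS a d' b) (dS b a d') (dS d' a b); ring.
have pdvf : forall j a c, partial a (fun y => dvf eta j y c 0) x
    = - ((c == ord0)%:R * partial a (fun y => G y ord0 (hidx j)) x).
  move=> j a c.
  have -> : (fun y => dvf eta j y c 0) = (fun y => (fun _ => (c == hidx j)%:R) y
      - (fun y => eta y 0 (hidx j)) y * (fun _ => (c == ord0)%:R) y).
    by apply/funext => y; rewrite dvfE.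
  rewrite (@partial_fgh R n (fun _ => (c == hidx j)%:R) (fun y => eta y 0 (hidx j))
     (fun _ => (c == ord0)%:R) a x (derivable_cst _ _ _)
     (smooth_derivable (etasm _) Ux) (derivable_cst _ _ _)).
  rewrite !partial_cst pe; ring.
have C3 : levi_civita G (fun _ => ecoord R ord0) (fun _ => ecoord R ord0) x = 0.
  by apply/colP => c; rewrite va K E00y // mul1r subrr mxE.
have C2b : forall i, levi_civita G (dvf eta i) (fun _ => ecoord R ord0) x = dvf eta i x.
  move=> i; apply/colP => c; rewrite levi_civitaE big1 ?add0r => [|a _]; last first.
    by rewrite partial_cst mulr0.
  under eq_bigr => a _ do rewrite sum_ecoord_r.
  by rewrite sum_dvf_r !K dvfE E00y //; ring.
have C2a : forall i, levi_civita G (fun _ => ecoord R ord0) (dvf eta i) x = dvf eta i x.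
  move=> i; apply/colP => c; rewrite levi_civitaE sum_ecoord_l pdvf d00b.
  under eq_bigr => a _ do rewrite sum_dvf_r.
  rewrite sumrB -mulr_sumr !sum_ecoord_r (Gsym c ord0 (hidx i)) !K dvfE E00y //.
  ring.
split; last (split; [move=> i; split; [exact: C2a | exact: C2b] | exact: C3]).

have hmetU : forall y, U y -> forall p q, hmet G eta p q y
    = G y (hidx p) (hidx q) - eta y 0 (hidx p) * eta y 0 (hidx q).
  move=> y Uy p q; rewrite /hmet gmetE sum_dvf_l !sum_dvf_r.
  rewrite (Sy y Uy (hidx p) ord0) -!(Ey y Uy) E00y //; ring.
have HE : forall p q, hmetmx G eta x p q
    = G x (hidx p) (hidx q) - eta x 0 (hidx p) * eta x 0 (hidx q).
  by move=> p q; rewrite mxE hmetU.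
pose Dm : 'M[R]_(n.*2.+1, n.*2) := \matrix_(c, k) dvf eta k x c 0.
have cp : forall k, dvf eta k x = Dm *m delta_mx k 0.
  by move=> k; rewrite -colE; apply/colP => c; rewrite !mxE.
have HD : hmetmx G eta x = Dm^T *m G x *m Dm.
  apply/matrixP => p q; rewrite mxE /hmet /gmet !cp trmx_mul trmx_delta.
  have -> : (delta_mx 0 p : 'rV[R]_(n.*2)) *m Dm^T *m G x *m (Dm *m delta_mx q 0)
     = (delta_mx 0 p : 'rV[R]_(n.*2)) *m (Dm^T *m G x *m Dm) *m (delta_mx q 0 : 'cV[R]_(n.*2))
    by rewrite !mulmxA.
  by rewrite -rowE -colE !mxE.
have Hu : hmetmx G eta x \in unitmx.
  apply: pd_unit => v v0; rewrite HD.
  have -> : v^T *m (Dm^T *m G x *m Dm) *m v = (Dm *m v)^T *m G x *m (Dm *m v).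
    by rewrite trmx_mul !mulmxA.
  have [_ pd] := Gpt x Ux; apply: pd.
  apply: contra v0 => /eqP h; apply/eqP/colP => k.
  have := congr1 (fun M : 'cV[R]_(n.*2.+1) => M (hidx k) 0) h => /=.
  rewrite !mxE.
  under eq_bigr => l _ do rewrite mxE dvfE /hidx (inj_eq (@lift_inj _ ord0)) [_ == ord0]eq_sym (negbTE (neq_lift _ _)) mulr0 subr0.
  under eq_bigr => l _ do rewrite eq_sym.
  by rewrite sum_delta_l.

have phmet : forall a p q, partial a (hmet G eta p q) x
    = partial a (fun y => G y (hidx p) (hidx q)) x
      - (eta x 0 (hidx p) * partial a (fun y => G y ord0 (hidx q)) x
         + eta x 0 (hidx q) * partial a (fun y => G y ord0 (hidx p)) x).
  move=> a p q.
  rewrite (@partial_loc R n U _ (fun y => G y (hidx p) (hidx q) - eta y 0 (hidx p) * eta y 0 (hidx q))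
     a x oU Ux (fun y Uy => hmetU y Uy p q)).
  rewrite (@partial_fgh R n (fun y => G y (hidx p) (hidx q)) (fun y => eta y 0 (hidx p))
     (fun y => eta y 0 (hidx q)) a x (smooth_derivable (Gsm _ _) Ux)
     (smooth_derivable (etasm _) Ux) (smooth_derivable (etasm _) Ux)).
  by rewrite !pe.
have d0sym : forall a b, partial a (fun y => G y ord0 b) x = partial b (fun y => G y ord0 a) x.
  by move=> a b; rewrite dS symd dS.
move=> i j.
have Wc : forall c, levi_civita G (dvf eta i) (dvf eta j) x c 0
   = christoffel G x c (hidx i) (hidx j)
     + (c == ord0)%:R * (2 * eta x 0 (hidx i) * eta x 0 (hidx j)
                         - partial (hidx i) (fun y => G y ord0 (hidx j)) x)
     + (c == hidx i)%:R * (- eta x 0 (hidx j)) + (c == hidx j)%:R * (- eta x 0 (hidx i)).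
  move=> c; rewrite levi_civitaE.
  under eq_bigr => a _ do rewrite pdvf.
  rewrite sum_dvf_l d00b.
  under [X in _ + X = _]eq_bigr => a _ do rewrite sum_dvf_r.
  rewrite sumrB -mulr_sumr !sum_dvf_r (Gsym c ord0 (hidx j)) !K E00y //.
  ring.

have GW : forall l, (G x *m levi_civita G (dvf eta i) (dvf eta j) x) l 0
   = 2^-1 * (partial (hidx i) (fun y => G y l (hidx j)) x
             + partial (hidx j) (fun y => G y (hidx i) l) x
             - partial l (fun y => G y (hidx i) (hidx j)) x)
     + G x l ord0 * (2 * eta x 0 (hidx i) * eta x 0 (hidx j)
                         - partial (hidx i) (fun y => G y ord0 (hidx j)) x)
     + G x l (hidx i) * (- eta x 0 (hidx j)) + G x l (hidx j) * (- eta x 0 (hidx i)).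
  move=> l; rewrite mxE.
  have sdm : forall (F : 'I_(n.*2.+1) -> R) b al,
      \sum_c F c * ((c == b)%:R * al) = F b * al.
    move=> F b al; rewrite -(sum_delta_r b F) big_distrl /=.
    by apply: eq_bigr => c _; rewrite mulrA.
  under eq_bigr => c _ do rewrite Wc !mulrDr.
  by rewrite !big_split /= low !(sdm (G x l)); ring.
have GR : forall l, (G x *m (\sum_(k < n.*2) hchristoffel G eta x k i j *: dvf eta k x
         - hmet G eta i j x *: ecoord R ord0)) l 0
   = \sum_(k < n.*2) hchristoffel G eta x k i j
        * (G x l (hidx k) - eta x 0 (hidx k) * G x l ord0)
     - hmet G eta i j x * G x l ord0.
  move=> l; rewrite mxE.
  under eq_bigr => c _ do rewrite !mxE summxE andbT.
  under eq_bigr => c _ do under eq_bigr => k _ do rewrite mxE.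
  under eq_bigr => c _ do rewrite mulrBr mulr_sumr.
  rewrite sumrB exchange_big /=.
  under eq_bigr => k _ do under eq_bigr => c _ do rewrite mulrCA.
  under eq_bigr => k _ do rewrite -mulr_sumr sum_dvf_r.
  under [X in _ - X = _]eq_bigr => c _ do rewrite mulrCA.
  by rewrite -mulr_sumr sum_delta_r.

have GWR : G x *m levi_civita G (dvf eta i) (dvf eta j) x
   = G x *m (\sum_(k < n.*2) hchristoffel G eta x k i j *: dvf eta k x
         - hmet G eta i j x *: ecoord R ord0).
  apply/colP => l; rewrite GW GR.
  case: (unliftP ord0 l) => [l0 ->|->].
  - rewrite -[lift ord0 l0]/(hidx l0) (Sy x Ux (hidx l0) ord0) -(Ey x Ux).
    under eq_bigr => k _ do rewrite (mulrC (eta x 0 (hidx k))) -HE mulrC.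
    rewrite /hchristoffel.
    under eq_bigr => k _ do rewrite mulrCA.
    rewrite -mulr_sumr (sum_inv _ _ (mulmxV Hu)) /dpartial !phmet hmetU // !d00b !d0.
    rewrite (d0sym (hidx j) (hidx i)) (d0sym (hidx l0) (hidx j)) (d0sym (hidx l0) (hidx i)).
    rewrite (Sy x Ux (hidx i) (hidx l0)).
    by field.
  - rewrite big1 => [|k _]; last by rewrite G00y // -(Ey x Ux) mulr1 subrr mulr0.
    rewrite G00y // -!(Ey x Ux) (symd (hidx j) (hidx i)) (dS (hidx i) (hidx j) ord0).
    rewrite d0 hmetU //.
    by field.
have := congr1 (mulmx (invmx (G x))) GWR.
by rewrite !mulKmx.
Qed.
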